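(* In the setting below, under the persistent excitation assumption and the inexact disturbance bound assumption, the minimal parameter set $\Theta_t=\Theta_0\cap\bigcap_{j=1}^t\Delta_j$ converges with probability 1 to a set $\Theta_\infty=\bigcap_{t\ge0}\Theta_t$ satisfying $\Theta_\infty\subseteq\{\theta\in\mathbb{R}^p:\|\theta-\theta^\ast\|\le\rho\sqrt{N_u/\beta}\}$.
   Context: Setting: $\theta^\ast\in\mathbb{R}^p$ is a fixed (unknown) parameter vector. $\Theta_0\subset\mathbb{R}^p$ is a compact convex polytope containing $\theta^\ast$. $\mathcal{W}=\{w\in\mathbb{R}^{n_x}:\Pi_w w\le\pi_w\}$ is a compact convex polytope with $\pi_w>0$. The disturbances $w_0,w_1,\dots$ are independent random vectors in $\mathbb{R}^{n_x}$. $D_0,D_1,\dots\in\mathbb{R}^{n_x\times p}$ is a given (non-random) sequence of regressor matrices. For $t\ge1$ the (random) unfalsified parameter set is $\Delta_t=\{\theta\in\mathbb{R}^p: D_{t-1}(\theta^\ast-\theta)+w_{t-1}\in\mathcal{W}\}$. $\|\cdot\|$ is the Euclidean norm (induced 2-norm for matrices); $\mathcal{B}=\{x\in\mathbb{R}^{n_x}:\|x\|\le1\}$; $\oplus$ is Minkowski sum. Persistent excitation assumption: there exist $\tau>0$, $\beta>0$ and an integer $N_u\ge\lceil p/n_x\rceil$ such that for every $t\ge0$, $\|D_t\|\le\tau$ and $\sum_{j=t}^{t+N_u-1}D_j^\top D_j\succeq\beta I$. Inexact disturbance bound assumption: there exist a compact set $\Omega\subset\mathbb{R}^{n_x}$ and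 $\rho>0$ with $\Omega\subseteq\mathcal{W}\subseteq\Omega\oplus\rho\mathcal{B}$, such that $w_t\in\Omega$ for all $t$, and a function $p_w:(0,\infty)\to(0,1]$ such that for all $w^0\in\partial\Omega$ (boundary of $\Omega$), all $\epsilon>0$ and all $t\ge0$, $\Pr\{\|w_t-w^0\|<\epsilon\}\ge p_w(\epsilon)$. *)

(* Defs.v *)
From HB Require Import structures.
From mathcomp Require Import all_boot all_order all_algebra.
From mathcomp Require Import all_classical all_reals all_analysis.
Set Implicit Arguments. Unset Strict Implicit. Unset Printing Implicit Defensive.
Import Order.TTheory GRing.Theory Num.Theory.
Import numFieldNormedType.Exports.
Local Open Scope classical_set_scope.
Local Open Scope ring_scope.

Section Defs.
Variable R : realType.

Definition enorm n (x : 'cV[R]_n) : R := Num.sqrt (\sum_i (x i 0) ^+ 2).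

(* ||A|| <= c for the induced 2-norm (spelled out: sup_x ||Ax||/||x|| <= c) *)
Definition opnorm_le m n (A : 'M[R]_(m, n)) (c : R) : Prop :=
  forall x : 'cV[R]_n, enorm (A *m x) <= c * enorm x.

Definition loewner_le n (A B : 'M[R]_n) : Prop :=
  forall x : 'cV[R]_n, (x^T *m A *m x) 0 0 <= (x^T *m B *m x) 0 0.

Definition unit_ball n : set 'cV[R]_n := [set x | enorm x <= 1].

Definition minkowski_ball n (A : set 'cV[R]_n) (r : R) : set 'cV[R]_n :=
  [set a + r *: b | a in A & b in @unit_ball n].

Definition hpoly m n (A : 'M[R]_(m, n)) (b : 'cV[R]_m) : set 'cV[R]_n :=
  [set x | forall i, (A *m x) i 0 <= b i 0].

(* compact convex polytope = compact H-polyhedron (automatically convex) *)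
Definition compact_polytope n (S : set 'cV[R]_n) : Prop :=
  (exists m (A : 'M[R]_(m, n)) (b : 'cV[R]_m), S = hpoly A b) /\ compact S.

Definition boundary n (S : set 'cV[R]_n) : set 'cV[R]_n :=
  closure S `\` interior S.

Definition vborel n : set (set 'cV[R]_n) := <<s [set U | open U] >>.

Definition hausdorff_cvg n (S : nat -> set 'cV[R]_n) (L : set 'cV[R]_n) : Prop :=
  forall e : R, 0 < e -> exists T : nat, forall t, (T <= t)%N ->
    S t `<=` minkowski_ball L e /\ L `<=` minkowski_ball (S t) e.

End Defs.

Section Prob.
Variables (d : measure_display) (T : measurableType d) (R : realType).

Definition random_vector n (X : T -> 'cV[R]_n) : Prop :=
  forall B, vborel B -> measurable (X @^-1` B).

Definition mutually_independent (P : probability T R) n (w : nat -> T -> 'cV[R]_n) :=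
  forall (s : seq nat) (B : nat -> set 'cV[R]_n), uniq s ->
    (forall i, vborel (B i)) ->
    P (\bigcap_(i in [set` s]) (w i @^-1` B i)) =
    (\prod_(i <- s) P (w i @^-1` B i))%E.

End Prob.

(* unfalsified parameter set Delta_t, t >= 1 *)
Definition Delta (R : realType) T nx p (D : nat -> 'M[R]_(nx, p)) (W : set 'cV[R]_nx)
  (w : nat -> T -> 'cV[R]_nx) (thetastar : 'cV[R]_p) (t : nat) (om : T) : set 'cV[R]_p :=
  [set theta | W (D t.-1 *m (thetastar - theta) + w t.-1 om)].

Definition Theta (R : realType) T nx p (Theta0 : set 'cV[R]_p) (D : nat -> 'M[R]_(nx, p))
  (W : set 'cV[R]_nx) (w : nat -> T -> 'cV[R]_nx) (thetastar : 'cV[R]_p)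
  (t : nat) (om : T) : set 'cV[R]_p :=
  Theta0 `&` [set theta | forall j, (1 <= j <= t)%N -> Delta D W w thetastar j om theta].

Definition Theta_inf (R : realType) T nx p (Theta0 : set 'cV[R]_p) (D : nat -> 'M[R]_(nx, p))
  (W : set 'cV[R]_nx) (w : nat -> T -> 'cV[R]_nx) (thetastar : 'cV[R]_p)
  (om : T) : set 'cV[R]_p :=
  \bigcap_(t in [set: nat]) Theta Theta0 D W w thetastar t om.

(* Main.v *)
Require Import Defs.
From HB Require Import structures.
From mathcomp Require Import all_boot all_order all_algebra.
From mathcomp Require Import all_classical all_reals all_analysis.
Import Order.TTheory GRing.Theory Num.Theory.
Import numFieldNormedType.Exports.
Local Open Scope classical_set_scope.
Local Open Scope ring_scope.

From mathcomp Require Import ring lra zify.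
Set Implicit Arguments. Unset Strict Implicit. Unset Printing Implicit Defensive.



Section LinAlg.
Variable R : realType.
Variable n : nat.
Implicit Types x y z : 'cV[R]_n.

Definition dot x y : R := \sum_i x i 0 * y i 0.

Lemma dot_ge0 x : 0 <= dot x x.
Proof. by apply: sumr_ge0 => i _; rewrite -expr2 sqr_ge0. Qed.

Lemma enorm_ge0 x : 0 <= enorm x.
Proof. exact: sqrtr_ge0. Qed.

Lemma enorm_sq x : enorm x ^+ 2 = dot x x.
Proof.
rewrite /enorm sqr_sqrtr; last by apply: sumr_ge0 => i _; rewrite sqr_ge0.
by apply: eq_bigr => i _; rewrite expr2.
Qed.

Lemma dotC x y : dot x y = dot y x.
Proof. by apply: eq_bigr => i _; rewrite mulrC. Qed.

Lemma dotDr x y z : dot x (y + z) = dot x y + dot x z.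
Proof. by rewrite /dot -big_split /=; apply: eq_bigr => i _; rewrite mxE mulrDr. Qed.

Lemma dotZr x y (c : R) : dot x (c *: y) = c * dot x y.
Proof. by rewrite /dot mulr_sumr; apply: eq_bigr => i _; rewrite mxE mulrCA. Qed.

Lemma dotNr x y : dot x (- y) = - dot x y.
Proof. by rewrite -scaleN1r dotZr mulN1r. Qed.

Lemma dotBr x y z : dot x (y - z) = dot x y - dot x z.
Proof. by rewrite dotDr dotNr. Qed.

Lemma dotDl x y z : dot (y + z) x = dot y x + dot z x.
Proof. by rewrite dotC dotDr !(dotC x). Qed.
Lemma dotZl x y (c : R) : dot (c *: y) x = c * dot y x.
Proof. by rewrite dotC dotZr dotC. Qed.
Lemma dotNl x y : dot (- y) x = - dot y x.
Proof. by rewrite dotC dotNr dotC. Qed.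
Lemma dotBl x y z : dot (y - z) x = dot y x - dot z x.
Proof. by rewrite dotDl dotNl. Qed.

Lemma dot0r x : dot x 0 = 0.
Proof. by rewrite /dot big1 // => i _; rewrite mxE mulr0. Qed.

Lemma enorm0_eq {x} : enorm x = 0 -> forall y, dot x y = 0.
Proof.
move=> h y; have : dot x x = 0 by rewrite -enorm_sq h expr0n.
move=> /psumr_eq0P H; rewrite /dot big1 // => i _.
have /eqP := H (fun i _ => (ltac:(by rewrite -expr2 sqr_ge0) : 0 <= x i 0 * x i 0)) i isT.
rewrite -expr2 sqrf_eq0 => /eqP ->; by rewrite mul0r.
Qed.

Lemma CS x y : dot x y <= enorm x * enorm y.
Proof.
set a := enorm x; set b := enorm y.
have a0 : 0 <= a by exact: enorm_ge0.
have b0 : 0 <= b by exact: enorm_ge0.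
have [a00|an0] := eqVneq a 0; first by rewrite (enorm0_eq a00 y) mulr_ge0.
have [b00|bn0] := eqVneq b 0; first by rewrite dotC (enorm0_eq b00 x) mulr_ge0.
have ap : 0 < a by rewrite lt_def an0.
have bp : 0 < b by rewrite lt_def bn0.
have := dot_ge0 (b *: x - a *: y).
rewrite !dotBl !dotBr !dotZl !dotZr -!enorm_sq (dotC y x) -/a -/b => H.
have H2 : 0 <= (a * b) * (a * b - dot x y) by nra.
have abp : 0 < a * b by exact: mulr_gt0.
by move: H2; rewrite pmulr_rge0 // subr_ge0.
Qed.

Lemma enormN x : enorm (- x) = enorm x.
Proof.
by rewrite /enorm; congr Num.sqrt; apply: eq_bigr => i _; rewrite mxE sqrrN.
Qed.

Lemma CSabs x y : `|dot x y| <= enorm x * enorm y.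
Proof.
rewrite ler_norml CS andbT lerNl -dotNl -(enormN x); exact: CS.
Qed.

Lemma enorm_triangle x y : enorm (x + y) <= enorm x + enorm y.
Proof.
rewrite -(ler_pXn2r (_ : 0 < 2)%N) ?nnegrE ?addr_ge0 ?enorm_ge0 //.
rewrite enorm_sq dotDl !dotDr (dotC y x) -!enorm_sq.
have := CS x y; nra.
Qed.

Lemma enormZ x (c : R) : enorm (c *: x) = `|c| * enorm x.
Proof.
rewrite /enorm -(sqrtr_sqr c) -sqrtrM ?sqr_ge0 //; congr Num.sqrt.
by rewrite mulr_sumr; apply: eq_bigr => i _; rewrite mxE exprMn.
Qed.

Lemma enormB x y : enorm (x - y) = enorm (y - x).
Proof. by rewrite -enormN opprB. Qed.

Lemma enorm0 : enorm (0 : 'cV[R]_n) = 0.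
Proof. by rewrite -(scale0r 0) enormZ normr0 mul0r. Qed.

Lemma enorm_entries x (c : R) : 0 <= c -> (forall i, `|x i 0| <= c) ->
  enorm x <= Num.sqrt (n%:R * c ^+ 2).
Proof.
move=> c0 h; rewrite ler_sqrt ?mulr_ge0 ?sqr_ge0 //.
rewrite -[n in n%:R]card_ord -sum1_card natr_sum mulr_suml.
apply: ler_sum => i _; rewrite mul1r -real_normK ?num_real //.
by rewrite lerXn2r ?nnegrE ?normr_ge0 // h.
Qed.

Lemma small_entries (e : R) : 0 < e -> exists2 c : R, 0 < c &
  forall x, (forall i, `|x i 0| <= c) -> enorm x < e.
Proof.
move=> e0; exists (e / (n.+1)%:R); first by rewrite divr_gt0.
move=> x h; have c0 : 0 <= e / (n.+1)%:R by rewrite divr_ge0 ?ltW.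
have HH := enorm_entries c0 h. apply: (le_lt_trans HH).
rewrite -[X in _ < X](gtr0_norm e0) -sqrtr_sqr ltr_sqrt ?exprn_gt0 //.
rewrite expr_div_n mulrA ltr_pdivrMr ?exprn_gt0 ?ltr0n //.
rewrite mulrC ltr_pM2l ?exprn_gt0 //.
rewrite expr2 -natrM ltr_nat; lia.
Qed.

End LinAlg.



Section Topo.
Variable R : realType.
Variable n : nat.
Implicit Types x y z : 'cV[R]_n.

Lemma near_enorm x (e : R) : 0 < e -> \forall z \near x, enorm (z - x) < e.
Proof.
move=> e0; have [c c0 hc] := small_entries n e0.
apply/nbhs_ballP; exists c => // z [_ bz]; apply: hc => i.
have := bz i 0; rewrite /ball /= !mxE distrC; exact: ltW.
Qed.

Lemma dot_continuous y : continuous (dot y).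
Proof.
move=> x; have FF : Filter (nbhs x) by apply: nbhs_filter.
apply/cvgrPdist_lt => eps eps0.
have k0 : 0 < enorm y + 1 by rewrite ltr_wpDl ?enorm_ge0.
have e1 : 0 < eps / (enorm y + 1) by exact: divr_gt0.
apply: filterS (near_enorm x e1) => z /= hz.
rewrite -dotBr -normrN -dotNr opprB.
apply: (le_lt_trans (CSabs _ _)).
rewrite (_ : eps = (enorm y + 1) * (eps / (enorm y + 1))); last first.
  by rewrite mulrC divfK // gt_eqF.
have := enorm_ge0 (z - x); have := enorm_ge0 y.
have : 0 < eps / (enorm y + 1) by exact: divr_gt0.
nra.
Qed.

Lemma entry_le_enorm x i : `|x i 0| <= enorm x.
Proof.
rewrite -sqrtr_sqr ler_sqrt; last by apply: sumr_ge0 => k _; rewrite sqr_ge0.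
rewrite (bigD1 i) //= ler_wpDr //; apply: sumr_ge0 => k _; exact: sqr_ge0.
Qed.

Lemma row_dot m (A : 'M[R]_(m, n)) (x : 'cV[R]_n) i :
  (A *m x) i 0 = dot (row i A)^T x.
Proof. by rewrite mxE; apply: eq_bigr => k _; rewrite !mxE. Qed.

Lemma hpoly_closed m (A : 'M[R]_(m, n)) (b : 'cV[R]_m) : closed (hpoly A b).
Proof.
have -> : hpoly A b = \bigcap_(i in setT) (dot (row i A)^T @^-1` [set r | r <= b i 0]).
  apply/seteqP; split => x /=.
    by move=> h i _; rewrite /= -row_dot; exact: h.
  by move=> h i; rewrite row_dot; exact: h.
apply: closed_bigI => i _; apply: preimage_closed; last exact: closed_le.
by move=> x _; exact: dot_continuous.
Qed.

Lemma enorm_ball_open (w0 : 'cV[R]_n) (e : R) : open [set x | enorm (x - w0) < e].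
Proof.
rewrite openE => x /= hx; rewrite /interior.
have e1 : 0 < e - enorm (x - w0) by rewrite subr_gt0.
apply: filterS (near_enorm x e1) => z /= hz.
have := enorm_triangle (z - x) (x - w0).
rewrite addrA subrK => h; apply: (le_lt_trans h); lra.
Qed.

Lemma argmax_ex (Om : set 'cV[R]_n) y : Om !=set0 -> compact Om ->
  exists s, Om s /\ forall a, Om a -> dot y a <= dot y s.
Proof.
move=> ne cO; have [c cO' h] := compact_EVT_max ne cO (continuous_subspaceT (A:=Om) (dot_continuous (y:=y))).
exists c; split; first by move: cO'; rewrite inE.
by move=> a Oa; apply: h; rewrite inE.
Qed.

Lemma argmax_boundary (Om : set 'cV[R]_n) y s : 0 < enorm y -> Om s ->
  (forall a, Om a -> dot y a <= dot y s) -> boundary Om s.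
Proof.
move=> yp Os hmax; split; first exact: subset_closure.
rewrite /interior /= => /nbhs_ballP [e /= e0 he].
set t := e / (enorm y + 1).
have k0 : 0 < enorm y + 1 by rewrite ltr_wpDl ?enorm_ge0.
have t0 : 0 < t by exact: divr_gt0.
have : Om (s + t *: y).
  apply: he; split => // i j; rewrite (ord1 j) /ball /= !mxE opprD addrA subrr add0r normrN normrM.
  rewrite (gtr0_norm t0); apply: (le_lt_trans (ler_wpM2l (ltW t0) (entry_le_enorm y i))).
  rewrite /t mulrAC ltr_pdivrMr // ltr_pM2l //; lra.
move/hmax; rewrite dotDr dotZr -enorm_sq.
have : 0 < t * enorm y ^+ 2 by rewrite mulr_gt0 // exprn_gt0.
lra.
Qed.

End Topo.



Lemma set_seq_cat (I : eqType) (s t : seq I) : [set` s ++ t] = [set` s] `|` [set` t].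
Proof. by apply/seteqP; split => x /=; rewrite mem_cat => /orP. Qed.

Section Prob.
Variables (d : measure_display) (T : measurableType d) (R : realType).
Variable (P : probability T R) (nx : nat) (w : nat -> T -> 'cV[R]_nx).
Hypothesis hrv : forall t, random_vector (w t).
Hypothesis hind : mutually_independent P w.
Variable B : nat -> set 'cV[R]_nx.
Hypothesis hB : forall j, vborel (B j).
Variable N : nat.

Definition pr (X : set T) : R := fine (P X).
Definition Aev j := w j @^-1` B j.
Definition Gev (s : seq nat) := \bigcap_(i in [set` s]) Aev i.
Definition Eblk k := Gev (iota (k * N) N).
Fixpoint Fblk n := if n is n'.+1 then Fblk n' `&` ~` Eblk n' else setT.

Lemma A_meas j : measurable (Aev j).
Proof. exact: hrv. Qed.

Lemma G_cat s t : Gev (s ++ t) = Gev s `&` Gev t.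
Proof. by rewrite /Gev set_seq_cat bigcap_setU. Qed.

Lemma G_meas s : measurable (Gev s).
Proof.
elim: s => [|a s IH]; first by rewrite /Gev (_ : [set` [::]] = set0) ?bigcap_set0 //; apply/seteqP; split.
by rewrite -cat1s G_cat; apply: measurableI => //; rewrite /Gev set_cons1 bigcap_set1; exact: A_meas.
Qed.

Lemma E_meas k : measurable (Eblk k).
Proof. exact: G_meas. Qed.

Lemma F_meas n : measurable (Fblk n).
Proof. elim: n => [|n IH] //=; apply: measurableI => //; exact: measurableC (E_meas n). Qed.

Lemma prE X : measurable X -> P X = (pr X)%:E.
Proof. by move=> mX; rewrite /pr fineK // fin_num_measure. Qed.

Lemma pr_ge0 X : 0 <= pr X.
Proof. by rewrite /pr fine_ge0 // measure_ge0. Qed.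

Lemma pr_le1 X : measurable X -> pr X <= 1.
Proof. by move=> mX; rewrite -lee_fin -prE // probability_le1. Qed.

Lemma pr_G s : uniq s -> pr (Gev s) = \prod_(i <- s) pr (Aev i).
Proof.
move=> us; have h := hind us hB.
rewrite (eq_bigr (fun i => (pr (Aev i))%:E)) in h; last by move=> i _; rewrite (prE (A_meas i)).
rewrite prodEFin -/(Gev s) (prE (G_meas s)) in h. by case: h.
Qed.

Lemma pr_E k : pr (Eblk k) = \prod_(i <- iota (k * N) N) pr (Aev i).
Proof. exact/pr_G/iota_uniq. Qed.

Lemma key n s : uniq s -> all (fun i => n * N <= i)%N s ->
  pr (Gev s `&` Fblk n) = pr (Gev s) * \prod_(k < n) (1 - pr (Eblk k)).
Proof.
elim: n s => [|n IH] s us als; first by rewrite /= setIT big_ord0 mulr1.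
rewrite /= setIA -setDE big_ord_recr /=.
have mX : measurable (Gev s `&` Fblk n) by apply: measurableI; [exact: G_meas|exact: F_meas].
rewrite /pr (measureD mX (E_meas n)) ?ltey_eq ?fin_num_measure //.
rewrite fineB ?fin_num_measure //; last exact: measurableI (E_meas n).
rewrite -!/(pr _) (setIC _ (Eblk n)) setIA (setIC (Eblk n)) -G_cat.
have dis : all (fun i => i \notin iota (n * N) N) s.
  apply/allP => i /(allP als); rewrite mem_iota; lia.
have us' : uniq (s ++ iota (n * N) N).
  rewrite cat_uniq us iota_uniq andbT /=; apply/hasPn => i /= hi.
  apply/negP => /(allP dis) => /negP; by apply.
have a1 : all (fun i => n * N <= i)%N s.
  by apply/allP => i hi; have := allP als i hi; lia.
have a2 : all (fun i => n * N <= i)%N (s ++ iota (n * N) N).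
  rewrite all_cat; apply/andP; split; first exact: a1.
  by apply/allP => i; rewrite mem_iota; lia.
rewrite (IH s us a1) (IH _ us' a2).
rewrite (pr_G us') big_cat /= -(pr_G us) -pr_E; ring.
Qed.


Lemma pr_F n : pr (Fblk n) = \prod_(k < n) (1 - pr (Eblk k)).
Proof.
have := @key n [::] isT isT.
have -> : Gev [::] = setT by rewrite /Gev (_ : [set` [::]] = set0) ?bigcap_set0 //; apply/seteqP; split.
by rewrite setTI /pr probability_setT /= mul1r.
Qed.

Lemma bernoulli (q : R) n : 0 <= q <= 1 -> (1 - q) ^+ n * (1 + n%:R * q) <= 1.
Proof.
move=> /andP [q0 q1]; elim: n => [|n IH]; first by rewrite expr0 mul0r addr0 mulr1.
rewrite exprS -natr1.
have a0 : 0 <= (1 - q) ^+ n by rewrite exprn_ge0 // subr_ge0.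
have nn : 0 <= n%:R :> R by [].
have h : (1 - q) * (1 + (n%:R + 1) * q) <= 1 + n%:R * q by nra.
have := ler_wpM2l a0 h.
move: IH; set a := (1 - q) ^+ n => IH h2.
nra.
Qed.

Lemma bad_null (q : R) : 0 < q -> (forall k, q <= pr (Eblk k)) ->
  P (\bigcap_k ~` Eblk k) = 0%E.
Proof.
move=> q0 hq.
have q1 : q <= 1 by apply: le_trans (hq 0%N) _; apply: pr_le1; exact: E_meas.
have mb : measurable (\bigcap_k ~` Eblk k).
  by apply: bigcapT_measurable => k; exact: measurableC (E_meas k).
have sub n : \bigcap_k ~` Eblk k `<=` Fblk n.
  elim: n => [|n IH] x hx //=; split; [exact: IH | exact: hx].
have hb n : pr (\bigcap_k ~` Eblk k) <= (1 - q) ^+ n.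
  apply: le_trans (_ : pr (Fblk n) <= _).
    rewrite /pr fine_le ?fin_num_measure //; last by apply: le_measure; rewrite ?inE //; exact: F_meas.
    exact: F_meas.
  rewrite pr_F -[n in _ ^+ n]card_ord -prodr_const.
  apply: ler_prod => k _; rewrite subr_ge0 (pr_le1 (E_meas k)) /=.
  by rewrite lerD2l lerN2 hq.
rewrite (prE mb); congr (_%:E).
have e0 := pr_ge0 (\bigcap_k ~` Eblk k).
set e := pr _ in e0 hb *.
have [->//|en0] := eqVneq e 0.
have ep : 0 < e by rewrite lt_def en0.
have qe : 0 < q * e by exact: mulr_gt0.
set n := (Num.truncn (q * e)^-1).+1.
have hn : (q * e)^-1 < n%:R.
  by rewrite -truncn_lt_nat ?invr_ge0 ?ltW.
have hBe : (1 - q) ^+ n * (1 + n%:R * q) <= 1 by apply: bernoulli; rewrite (ltW q0) q1.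
have he := hb n.
have h1 : e * (1 + n%:R * q) <= 1.
  apply: le_trans hBe; apply: ler_wpM2r => //; by rewrite addr_ge0 // mulr_ge0 // ltW.
have : 1 < n%:R * (q * e) by rewrite -ltr_pdivrMr // div1r.
have : 0 <= n%:R :> R by [].
nra.
Qed.

End Prob.



Lemma decr_sub (X : Type) (S : nat -> set X) : (forall t, S t.+1 `<=` S t) ->
  forall s t, (s <= t)%N -> S t `<=` S s.
Proof.
move=> hS s t; elim: t => [|t IH]; first by rewrite leqn0 => /eqP ->.
rewrite leq_eqVlt => /orP [/eqP -> //|]; rewrite ltnS => /IH h.
exact: subset_trans (hS t) h.
Qed.

Section Haus.
Variable R : realType.
Variable n : nat.

Lemma decr_hausdorff (S : nat -> set 'cV[R]_n) (K : set 'cV[R]_n) :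
  compact K -> (forall t, closed (S t)) -> (forall t, S t `<=` K) ->
  (forall t, S t.+1 `<=` S t) -> hausdorff_cvg S (\bigcap_(t in setT) S t).
Proof.
move=> cK clS SK hS e e0.
set L := \bigcap_(t in setT) S t.
have LS : forall t, L `<=` minkowski_ball (S t) e.
  move=> t x Lx; exists x; first exact: Lx.
  exists 0; first by rewrite /unit_ball /= enorm0.
  by rewrite scaler0 addr0.
case: (pselect (exists T : nat, forall t, (T <= t)%N -> S t `<=` minkowski_ball L e)) => [[T hT]|hn].
  by exists T => t Tt; split; [exact: hT|exact: LS].
exfalso.
set Gs := [set x | forall y, L y -> e < enorm (x - y)].
have hG : forall x, ~ minkowski_ball L e x -> Gs x.
  move=> x hx y Ly; rewrite ltNge; apply/negP => hle; apply: hx.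
  exists y => //; exists (e^-1 *: (x - y)).
    rewrite /unit_ball /= enormZ gtr0_norm ?invr_gt0 //.
    by rewrite ler_pdivrMl // mulr1.
  by rewrite scalerA divff ?gt_eqF // scale1r addrC subrK.
have ne : forall t, exists x, S t x /\ Gs x.
  move=> t; apply: contrapT => hc; apply: hn; exists t => s ts x Sx.
  apply: contrapT => hx; apply: hc; exists x; split; last exact: hG.
  exact: (decr_sub hS ts).
set C := fun t => S t `&` closure Gs.
have FF : ProperFilter (filter_from setT C).
  apply: filter_from_proper; last first.
    by move=> t _; have [x [Sx Gx]] := ne t; exists x; split => //; exact: subset_closure.
  apply: filter_from_filter; first by exists 0%N.
  move=> i j _ _; exists (maxn i j) => // x [Sx Cx]; split; split => //.
    by apply: (decr_sub hS (leq_maxl i j)).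
  by apply: (decr_sub hS (leq_maxr i j)).
have [z [Kz clz]] := cK _ FF (ex_intro2 _ _ 0%N I (fun x (h : C 0%N x) => SK 0%N x h.1)).
have zC : forall t, C t z.
  move=> t; have : closed (C t) by apply: closedI; [exact: clS|exact: closed_closure].
  move=> /closure_id ->; move=> B nB; apply: clz => //; by exists t.
have Lz : L z by move=> t _; exact: (zC t).1.
have [g [Gg hg]] := (zC 0%N).2 _ (near_enorm z e0).
by have := Gg z Lz; rewrite ltNge (ltW hg).
Qed.

End Haus.



Section Core.
Variable R : realType.

Lemma core n (Om W : set 'cV[R]_n) (rho r kap : R) (a y wj s : 'cV[R]_n) :
  0 <= rho -> 0 <= r -> 0 <= kap -> W `<=` minkowski_ball Om rho -> W (a + wj) ->
  Om s -> (forall b, Om b -> dot y b <= dot y s) ->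
  (enorm y = 0 \/ enorm (wj - s) < r) -> enorm (a - y) <= kap ->
  enorm a <= rho + r + 2 * kap.
Proof.
move=> rho0 r0 k0 WOm Wa Os hmax hy hay.
have [a0 Oa0 [b hb hab]] := WOm _ Wa.
have h1 : dot y (a + wj) <= dot y s + rho * enorm y.
  rewrite -hab dotDr dotZr; apply: lerD; first exact: hmax.
  apply: ler_wpM2l => //; apply: le_trans (CS _ _) _.
  by rewrite -{2}(mulr1 (enorm y)); apply: ler_wpM2l; [exact: enorm_ge0|exact: hb].
have h2 : dot y s - r * enorm y <= dot y wj.
  have -> : dot y wj = dot y s + dot y (wj - s) by rewrite dotBr addrC subrK.
  rewrite lerD2l; case: hy => [y0|hw].
    by rewrite (enorm0_eq y0) y0 mulr0 oppr0.
  rewrite lerNl; apply: le_trans (ler_norm _) _; rewrite -dotNr.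
  apply: le_trans (CSabs _ _) _; rewrite enormN mulrC.
  by apply: ler_wpM2r; [exact: enorm_ge0|exact: ltW].
have h3 : enorm y ^+ 2 - enorm y * kap <= dot y a.
  have -> : dot y a = dot y y + dot y (a - y) by rewrite dotBr addrC subrK.
  rewrite enorm_sq lerD2l lerNl; apply: le_trans (ler_norm _) _.
  rewrite -dotNr; apply: le_trans (CSabs _ _) _; rewrite enormN.
  by apply: ler_wpM2l; [exact: enorm_ge0|].
move: h1; rewrite dotDr => h1.
have hy2 : enorm y ^+ 2 <= (rho + r + kap) * enorm y by lra.
have ny := enorm_ge0 y.
have hyc : enorm y <= rho + r + kap by nra.
have := enorm_triangle y (a - y); rewrite addrC subrK.
lra.
Qed.

Lemma xTy n (x y : 'cV[R]_n) : (x^T *m y) 0 0 = dot x y.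
Proof. by rewrite mxE; apply: eq_bigr => i _; rewrite mxE. Qed.

Lemma quad n p (v : 'cV[R]_p) (D : nat -> 'M[R]_(n, p)) (t N : nat) :
  (v^T *m (\sum_(t <= j < t + N) (D j)^T *m D j) *m v) 0 0 =
  \sum_(t <= j < t + N) dot (D j *m v) (D j *m v).
Proof.
rewrite mulmx_sumr mulmx_suml summxE; apply: eq_bigr => j _.
by rewrite -xTy trmx_mul !mulmxA.
Qed.

Lemma quad_scalar p (v : 'cV[R]_p) (b : R) :
  (v^T *m b%:M *m v) 0 0 = b * dot v v.
Proof. by rewrite mul_mx_scalar -scalemxAl mxE xTy. Qed.

Lemma density p (v : 'cV[R]_p) (eta : R) : 0 < eta ->
  exists q : 'cV[rat]_p, enorm (v - map_mx ratr q) < eta.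
Proof.
move=> e0; have [c c0 hc] := small_entries p e0.
have h : forall i, v i 0 - c < v i 0 by move=> i; rewrite ltrBlDr ltrDl.
exists (\col_i sval (cid (rat_in_itvoo (h i)))).
apply: hc => i; rewrite !mxE.
case: cid => q /=; rewrite in_itv /= => /andP [h1 h2].
by rewrite ger0_norm ?subr_ge0 ?ltW //; lra.
Qed.

Lemma Delta_hpoly T nx p (D : nat -> 'M[R]_(nx, p)) m (Pi : 'M[R]_(m, nx)) (pi : 'cV[R]_m)
  (w : nat -> T -> 'cV[R]_nx) (ts : 'cV[R]_p) j om :
  Delta D (hpoly Pi pi) w ts j om =
  hpoly (- (Pi *m D j.-1)) (pi - Pi *m (D j.-1 *m ts + w j.-1 om)).
Proof.
have e : forall th, Pi *m (D j.-1 *m (ts - th) + w j.-1 om) =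
    (- (Pi *m D j.-1)) *m th + Pi *m (D j.-1 *m ts + w j.-1 om).
  move=> th; rewrite mulmxDr mulmxBr mulmxDr mulmxBr !mulmxA mulNmx; set X := Pi *m D j.-1 *m ts; set Y := Pi *m D j.-1 *m th; set Z := Pi *m w j.-1 om.
  by rewrite addrAC addrC.
apply/seteqP; split => th /= h i; move: (h i); rewrite e !mxE; lra.
Qed.


Lemma lim_le (X c K : R) : 0 <= K ->
  (forall del, 0 < del -> del <= 1 -> X <= c + del * K) -> X <= c.
Proof.
move=> K0 h; rewrite leNgt; apply/negP => Xc.
have K1 : 0 < K + 1 by rewrite ltr_wpDl.
set del := Num.min 1 ((X - c) / (K + 1)).
have d0 : 0 < del by rewrite lt_min ltr01 divr_gt0 // subr_gt0.
have d1 : del <= 1 by rewrite ge_min lexx.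
have d2 : del <= (X - c) / (K + 1) by rewrite ge_min lexx orbT.
have := h _ d0 d1.
have : del * (K + 1) <= X - c by rewrite -ler_pdivlMr.
nra.
Qed.

End Core.

Unset Implicit Arguments. Set Strict Implicit. Set Printing Implicit Defensive.

Theorem corollary4 (R : realType) (d : measure_display) (T : measurableType d)
  (P : probability T R) (nx p : nat)
  (thetastar : 'cV[R]_p) (Theta0 : set 'cV[R]_p)
  (m : nat) (Pi_w : 'M[R]_(m, nx)) (pi_w : 'cV[R]_m)
  (w : nat -> T -> 'cV[R]_nx) (D : nat -> 'M[R]_(nx, p))
  (tau beta : R) (N_u : nat)
  (Om : set 'cV[R]_nx) (rho : R) (p_w : R -> R) :
  (* setting *)
  compact_polytope Theta0 -> Theta0 thetastar ->
  compact_polytope (hpoly Pi_w pi_w) -> (forall i, 0 < pi_w i 0) ->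
  (forall t, random_vector (w t)) -> mutually_independent P w ->
  (* persistent excitation *)
  0 < tau -> 0 < beta -> (Num.ceil (p%:R / nx%:R : R) <= N_u%:Z)%R ->
  (forall t, opnorm_le (D t) tau) ->
  (forall t, loewner_le (beta%:M)
     (\sum_(t <= j < t + N_u) (D j)^T *m D j)) ->
  (* inexact disturbance bound *)
  compact Om -> 0 < rho ->
  Om `<=` hpoly Pi_w pi_w -> hpoly Pi_w pi_w `<=` minkowski_ball Om rho ->
  (forall t om, Om (w t om)) ->
  (forall e, 0 < e -> 0 < p_w e <= 1) ->
  (forall w0 e t, boundary Om w0 -> 0 < e ->
     ((p_w e)%:E <= P [set om | (enorm (w t om - w0) < e)%R])%E) ->
  (* conclusion: almost surely Theta_t -> Theta_inf and Theta_inf in the ball *)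
  {ae P, forall om,
     hausdorff_cvg (fun t => Theta Theta0 D (hpoly Pi_w pi_w) w thetastar t om)
                   (Theta_inf Theta0 D (hpoly Pi_w pi_w) w thetastar om) /\
     Theta_inf Theta0 D (hpoly Pi_w pi_w) w thetastar om `<=`
       [set theta | enorm (theta - thetastar) <= rho * Num.sqrt (N_u%:R / beta)]}.
Proof.
move=> hT0 hstar hW hpi hrv hind htau hbeta hceil hD hPE cOm hrho hOmW hWOm hwOm hpw hbd.
rewrite /almost_everywhere /prop_near1 /nbhs /=.
set W := hpoly Pi_w pi_w.
have [om0 _] : (setT : set T) !=set0.
  apply/set0P/eqP => h; have := probability_setT P; rewrite h measure0.
  by case=> /esym/eqP; rewrite oner_eq0.
have Omne : Om !=set0 by exists (w 0%N om0); exact: hwOm.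
pose sel y := sval (cid (argmax_ex y Omne cOm)).
have selP : forall y, Om (sel y) /\ (forall a, Om a -> dot y a <= dot y (sel y)).
  by move=> y; rewrite /sel; case: cid.
pose vq (q : 'cV[rat]_p) : 'cV[R]_p := map_mx ratr q.
pose rk (k : nat) : R := (k.+1%:R)^-1.
have rk0 : forall k, 0 < rk k by move=> k; rewrite invr_gt0.
pose Bq q k j : set 'cV[R]_nx := if enorm (D j *m vq q) == 0 then setT
  else [set x | enorm (x - sel (D j *m vq q)) < rk k].
have hBq : forall q k j, vborel (Bq q k j).
  move=> q k j; rewrite /Bq; case: ifP => _; apply: sub_sigma_algebra.
    exact: openT.
  exact: enorm_ball_open.
pose bad q k := \bigcap_b ~` Eblk w (Bq q k) N_u b.
have bad0 : forall q k, P (bad q k) = 0.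
  move=> q k; set c := p_w (rk k).
  have /andP [c0 c1] := hpw _ (rk0 k); rewrite -/c in c0 c1.
  apply: (bad_null hrv hind (hBq q k) (q := c ^+ N_u)); first exact: exprn_gt0.
  move=> b; rewrite (pr_E hrv hind (hBq q k)).
  rewrite (_ : iota _ _ = index_iota (b * N_u) (b * N_u + N_u)); last by rewrite /index_iota addKn.
  apply: le_trans (_ : c ^+ N_u <= \prod_(b * N_u <= i < b * N_u + N_u) c) _.
    by rewrite prodr_const_nat addKn.
  apply: ler_prod => j _; rewrite (ltW c0) /=.
  rewrite /Aev /Bq; case: ifP => hy.
    by rewrite preimage_setT /pr probability_setT.
  set y := D j *m vq q in hy *.
  have mA : measurable (w j @^-1` [set x | enorm (x - sel y) < rk k]).
    by apply: hrv; apply: sub_sigma_algebra; exact: enorm_ball_open.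
  rewrite /pr -lee_fin fineK ?fin_num_measure //.
  apply: hbd (rk0 k).
  have yp : 0 < enorm y by rewrite lt_def hy enorm_ge0.
  exact: argmax_boundary yp (selP y).1 (selP y).2.
pose badn (i : nat) := if (unpickle i : option ('cV[rat]_p * nat)) is Some (q, k)
  then bad q k else set0.
have det : forall om, (forall q k, ~ bad q k om) ->
  hausdorff_cvg ((Theta Theta0 D W w thetastar)^~ om)
    (Theta_inf Theta0 D W w thetastar om) /\
  Theta_inf Theta0 D W w thetastar om `<=`
    [set theta | enorm (theta - thetastar) <= rho * Num.sqrt (N_u%:R / beta)].
  move=> om nbad; split.
    apply: (decr_hausdorff (K := Theta0)) => [|t|t|t].
    - by case: hT0.
    - rewrite /Theta; apply: closedI.
        by case: hT0 => -[m0 [A0 [b0 ->]]] _; exact: hpoly_closed.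
      rewrite (_ : [set theta | _] = \bigcap_(j in [set j | (1 <= j <= t)%N])
          Delta D W w thetastar j om); last first.
        by apply/seteqP; split => x /= h j hj; apply: h.
      apply: closed_bigI => j _; rewrite Delta_hpoly; exact: hpoly_closed.
    - by move=> x [].
    - move=> x [h0 h]; split => // j /andP [j1 jt]; apply: h.
      by rewrite j1 (leq_trans jt).
  move=> th hth /=.
  set v := thetastar - th.
  have hWj : forall j, W (D j *m v + w j om).
    move=> j; have [_ h] := hth j.+1 I; exact: (h j.+1 (leqnn _)).
  have keyb : forall del, 0 < del -> beta * dot v v <= N_u%:R * (rho + del) ^+ 2.
    move=> del d0.
    set k := Num.truncn (2 / del).
    have rkd : rk k <= del / 2.
      rewrite /rk -[X in _ <= X]invf_div lef_pV2 ?posrE ?divr_gt0 //.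
      apply: ltW; rewrite -truncn_lt_nat ?divr_ge0 ?ltW //.
    set eta := del / (4 * tau).
    have eta0 : 0 < eta by rewrite divr_gt0 // mulr_gt0.
    have [q hq] := density v eta0.
    have [b hb] : exists b, Eblk w (Bq q k) N_u b om.
      apply: contrapT => h; apply: (nbad q k) => b _ hb; apply: h; by exists b.
    set t := b * N_u.
    have hj : forall j, (t <= j < t + N_u)%N -> enorm (D j *m v) <= rho + del.
      move=> j hj.
      have Bj : Bq q k j (w j om).
        apply: (hb j); rewrite /= mem_iota; exact: hj.
      set y := D j *m vq q.
      have hkap : enorm (D j *m v - y) <= tau * eta.
        rewrite /y -mulmxBr; apply: le_trans (hD j _) _.
        by apply: ler_wpM2l; [exact: ltW|exact: ltW].
      have hyw : enorm y = 0 \/ enorm (w j om - sel y) < rk k.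
        move: Bj; rewrite /Bq -/y; case: ifP => [/eqP ->|_ h]; [by left|by right].
      apply: le_trans (core (ltW hrho) (ltW (rk0 k)) (mulr_ge0 (ltW htau) (ltW eta0))
        hWOm (hWj j) (selP y).1 (selP y).2 hyw hkap) _.
      have -> : tau * eta = del / 4 by rewrite /eta; field; rewrite gt_eqF.
      lra.
    have := hPE t v; rewrite quad_scalar quad => h.
    apply: le_trans h _.
    apply: le_trans (_ : \sum_(t <= j < t + N_u) (rho + del) ^+ 2 <= _).
      apply: ler_sum_nat => j hjt; rewrite -enorm_sq.
      by rewrite lerXn2r ?nnegrE ?enorm_ge0 ?hj // addr_ge0 // ltW.
    by rewrite sumr_const_nat addKn mulr_natl.
  have hlim : beta * dot v v <= N_u%:R * rho ^+ 2.
    apply: (lim_le (K := N_u%:R * (2 * rho + 1))).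
      by rewrite mulr_ge0 // addr_ge0 // mulr_ge0 // ltW.
    move=> del d0 d1; apply: le_trans (keyb _ d0) _.
    have N0 : 0 <= N_u%:R :> R by [].
    have : (rho + del) ^+ 2 <= rho ^+ 2 + del * (2 * rho + 1) by nra.
    move=> h; have := ler_wpM2l N0 h; lra.
  rewrite enormB -/v.
  have -> : enorm v = Num.sqrt (dot v v) by rewrite -enorm_sq sqrtr_sqr ger0_norm ?enorm_ge0.
  rewrite -[rho]gtr0_norm // -sqrtr_sqr -sqrtrM ?sqr_ge0 // ler_sqrt; last first.
    by rewrite mulr_ge0 ?sqr_ge0 // divr_ge0 // ltW.
  by rewrite mulrA ler_pdivlMr //; nra.
apply: (@negligibleS _ _ _ _ (\bigcup_i badn i)).
  move=> om nQ; apply: contrapT => nb; apply: nQ; apply: det => q k bqk.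
  apply: nb; exists (pickle (q, k)) => //; by rewrite /badn pickleK.
apply: negligible_bigcup => i; exists (badn i); split => //.
  rewrite /badn; case: unpickle => [[q k]|] //.
  apply: bigcapT_measurable => b; apply: measurableC.
  exact: (E_meas hrv (hBq q k) N_u b).
rewrite /badn; case: unpickle => [[q k]|]; last exact: measure0.
exact: bad0.
Qed.
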